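(* The finitary group $F$ and the full isometry group $W$ of the rooted tree $X^*$ are layered and saturated.
   Context: $X$ is a finite alphabet with $|X|\ge2$, $\mathcal T=X^*$, $W=\mathrm{Aut}(\mathcal T)$. $\mathrm{Sym}(X)$ acts on $\mathcal T$ by $(x_1x_2\cdots x_n)^\pi=x_1^\pi x_2\cdots x_n$. For $v\in X^*$, $g\in W$: $v*g$ acts as $g$ on the subtree $v\mathcal T$ ($(vw)^{v*g}=vw^g$) and fixes other vertices; $g@v$ is the state, $(vw)^g=v^gw^{g@v}$. The finitary group is $F=\langle v*\pi: v\in X^*,\pi\in\mathrm{Sym}(X)\rangle$. $G\le W$ is layered if it is transitive on every $X^n$ and $x*G\le G$ for all $x\in X$; saturated if for every $n$ it contains a characteristic subgroup $H_n$ fixing $X^n$ with $\{h@v:h\in H_n\}$ transitive on each level of $\mathcal T$ for every $v\in X^n$. *)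

(* Defs.v *)
(* Tree X^* = seq X; elements of W are functions seq X -> seq X.
   Groups act on the RIGHT: v^(g h) = (v^g)^h, so the product g*h is [tmul g h]. *)
From mathcomp Require Import all_boot all_fingroup.
Set Implicit Arguments. Unset Strict Implicit. Unset Printing Implicit Defensive.

Section Tree.
Variable X : finType.
Definition vmap := seq X -> seq X.

Definition tmul (g h : vmap) : vmap := fun w => h (g w).
Definition tone : vmap := fun w => w.

Definition is_tree_aut (g : vmap) : Prop :=
  bijective g /\ (forall w, size (g w) = size w) /\
  (forall (n : nat) w, g (take n w) = take n (g w)).

Definition W : vmap -> Prop := is_tree_aut.

Definition subgroupW (G : vmap -> Prop) : Prop :=
  (forall g, G g -> W g) /\ G tone /\
  (forall g h, G g -> G h -> G (tmul g h)) /\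
  (forall g, G g -> exists h, G h /\ tmul g h = tone /\ tmul h g = tone).

Definition perm_act (pi : {perm X}) : vmap :=
  fun w => match w with [::] => [::] | x :: w' => pi x :: w' end.

Definition vstar (v : seq X) (g : vmap) : vmap :=
  fun u => if take (size v) u == v then v ++ g (drop (size v) u) else u.

(* state g @ v : (vw)^g = v^g w^(g@v) *)
Definition state (g : vmap) (v : seq X) : vmap :=
  fun w => drop (size v) (g (v ++ w)).

Definition F : vmap -> Prop :=
  fun g => forall G, subgroupW G ->
    (forall (v : seq X) (pi : {perm X}), G (vstar v (perm_act pi))) -> G g.

Definition level_transitive (G : vmap -> Prop) (n : nat) : Prop :=
  forall u w : seq X, size u = n -> size w = n -> exists g, G g /\ g u = w.

Definition layered (G : vmap -> Prop) : Prop :=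
  subgroupW G /\ (forall n, level_transitive G n) /\
  (forall (x : X) g, G g -> G (vstar [:: x] g)).

Definition group_auto (G : vmap -> Prop) (phi : vmap -> vmap) : Prop :=
  (forall g, G g -> G (phi g)) /\
  (forall g1 g2, G g1 -> G g2 -> phi g1 = phi g2 -> g1 = g2) /\
  (forall g, G g -> exists g', G g' /\ phi g' = g) /\
  (forall g1 g2, G g1 -> G g2 -> phi (tmul g1 g2) = tmul (phi g1) (phi g2)).

Definition characteristic (H G : vmap -> Prop) : Prop :=
  subgroupW H /\ (forall h, H h -> G h) /\
  (forall phi, group_auto G phi ->
     (forall h, H h -> H (phi h)) /\
     (forall h, H h -> exists h', H h' /\ phi h' = h)).

Definition saturated (G : vmap -> Prop) : Prop :=
  forall n : nat, exists H : vmap -> Prop,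
    characteristic H G /\
    (forall h, H h -> forall u : seq X, size u = n -> h u = u) /\
    (forall v : seq X, size v = n ->
       forall m, level_transitive (fun k => exists2 h, H h & k = state h v) m).
End Tree.

(* Main.v *)
Require Import Defs.
From mathcomp Require Import all_boot all_fingroup.
From Stdlib Require Import Classical FunctionalExtensionality.
Set Implicit Arguments. Unset Strict Implicit. Unset Printing Implicit Defensive.

Section Proof.
Variable X : finType.
Local Notation vm := (vmap X).
Local Notation W := (@W X).
Local Notation tone := (@tone X).
Implicit Types (g h f : vm) (v u w : seq X).

Lemma tone_ap g h : tmul g h = tone -> forall w, h (g w) = w.
Proof. by move=> E w; exact: (congr1 (fun f => f w) E). Qed.

Lemma W_size g : W g -> forall w, size (g w) = size w.
Proof. by case=> _ []. Qed.
Lemma W_take g : W g -> forall n w, g (take n w) = take n (g w).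
Proof. by case=> _ []. Qed.
Lemma W_inj g : W g -> injective g.
Proof. by case=> /bij_inj. Qed.
Lemma W_nil g : W g -> g [::] = [::].
Proof. by move=> Wg; apply/eqP; rewrite -size_eq0 (W_size Wg). Qed.

Lemma W_cat g v w : W g -> g (v ++ w) = g v ++ state g v w.
Proof.
move=> Wg; rewrite /state.
have E : take (size v) (g (v ++ w)) = g v by rewrite -(W_take Wg) take_size_cat.
by rewrite -{1}(cat_take_drop (size v) (g (v ++ w))) E.
Qed.

Lemma W_tone : W tone.
Proof. by split; [exists id | split]. Qed.

Lemma W_tmul g h : W g -> W h -> W (tmul g h).
Proof.
move=> Wg Wh; split; first exact: (bij_comp (proj1 Wh) (proj1 Wg)).
split=> [w|n w]; rewrite /tmul; first by rewrite (W_size Wh) (W_size Wg).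
by rewrite (W_take Wg) (W_take Wh).
Qed.

Lemma W_inv g : W g -> exists h, W h /\ tmul g h = tone /\ tmul h g = tone.
Proof.
move=> Wg; have [h gK hK] := proj1 Wg.
have Wh : W h.
  split; first by exists g.
  split=> [w|n w]; first by rewrite -(W_size Wg) hK.
  by apply: (W_inj Wg); rewrite hK (W_take Wg) hK.
by exists h; split=> //; split; apply: functional_extensionality.
Qed.

Lemma W_sub : subgroupW W.
Proof.
split=> //; split; first exact: W_tone.
split; [exact: W_tmul | exact: W_inv].
Qed.

Lemma inv_uniq g h h' : tmul g h = tone -> tmul h' g = tone -> h = h'.
Proof.
move=> E1 E2; apply: functional_extensionality => w.
by rewrite -{1}(tone_ap E2 w) (tone_ap E1).
Qed.

Lemma state_tmul g h v : W g -> W h ->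
  state (tmul g h) v = tmul (state g v) (state h (g v)).
Proof.
move=> Wg Wh; apply: functional_extensionality => w.
rewrite {1}/state /tmul (W_cat _ _ Wg) (W_cat _ _ Wh) drop_size_cat //.
by rewrite (W_size Wh) (W_size Wg).
Qed.

Lemma state_tone v : state tone v = tone.
Proof. by apply: functional_extensionality => w; rewrite /state drop_size_cat. Qed.

Lemma W_state g v : W g -> W (state g v).
Proof.
move=> Wg; have [h [Wh [E1 E2]]] := W_inv Wg.
split.
  exists (state h (g v)) => w.
    have := congr1 (fun f => f w) (state_tmul v Wg Wh).
    by rewrite E1 state_tone.
  have := congr1 (fun f => f w) (state_tmul (g v) Wh Wg).
  by rewrite E2 state_tone /= (tone_ap E1).
split=> [w|n w]; rewrite /state.
  by rewrite size_drop (W_size Wg) size_cat addKn.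
have -> : v ++ take n w = take (size v + n) (v ++ w).
  by rewrite take_cat ltnNge leq_addr /= addKn.
rewrite (W_take Wg) (W_cat _ _ Wg) take_cat (W_size Wg) ltnNge leq_addr /= addKn.
by rewrite drop_size_cat ?(W_size Wg) // drop_size_cat ?(W_size Wg).
Qed.


Lemma vstar_nil f : vstar [::] f = f.
Proof. by apply: functional_extensionality => w; rewrite /vstar take0 eqxx drop0. Qed.

Lemma vstar_tmul v f g : vstar v (tmul f g) = tmul (vstar v f) (vstar v g).
Proof.
apply: functional_extensionality => w; rewrite /vstar /tmul.
case E: (take (size v) w == v); last by rewrite E.
by rewrite take_size_cat // eqxx drop_size_cat.
Qed.

Lemma vstar_tone v : vstar v tone = tone.
Proof.
apply: functional_extensionality => w; rewrite /vstar.
by case: eqP => // E; rewrite -{1}E cat_take_drop.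
Qed.

Lemma vstar_cons x v f : vstar [:: x] (vstar v f) = vstar (x :: v) f.
Proof.
apply: functional_extensionality => w; case: w => [|y w]; rewrite /vstar //=.
rewrite take0 !eqseq_cons andbT.
case: (y =P x) => [->|] //=.
by rewrite drop0; case: ifP.
Qed.

Lemma W_vstar v f : W f -> W (vstar v f).
Proof.
move=> Wf; have [h [Wh [E1 E2]]] := W_inv Wf.
split.
  exists (vstar v h) => w.
    by have := congr1 (fun f => f w) (vstar_tmul v f h); rewrite E1 vstar_tone.
  by have := congr1 (fun f => f w) (vstar_tmul v h f); rewrite E2 vstar_tone.
split=> [w|n w]; rewrite /vstar.
  case: eqP => [E|//].
  have Hle : size v <= size w by rewrite -{1}E size_take_min geq_minr.
  by rewrite size_cat (W_size Wf) size_drop subnKC.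
case: (leqP (size v) n) => Hn.
  rewrite take_takel //.
  case E: (take (size v) w == v) => //.
  have -> : drop (size v) (take n w) = take (n - size v) (drop (size v) w).
    by rewrite take_drop subnK.
  by rewrite (W_take Wf) take_cat ltnNge Hn.
rewrite take_taker ?(ltnW Hn) //.
have -> : (take n w == v) = false.
  apply/negbTE/eqP => E'; have := congr1 size E'.
  by rewrite size_take_min => H; move: (geq_minl n (size w)); rewrite H leqNgt Hn.
case E: (take (size v) w == v) => //.
move/eqP: E => E.
by rewrite takel_cat ?(ltnW Hn) // -{1}E take_takel ?(ltnW Hn).
Qed.

Lemma vstar_fix v f u : W f -> size u = size v -> vstar v f u = u.
Proof.
move=> Wf Hs; rewrite /vstar take_oversize ?Hs //.
by case: eqP => [->|//]; rewrite drop_size (W_nil Wf) cats0.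
Qed.

Lemma state_vstar_self v f : state (vstar v f) v = f.
Proof.
apply: functional_extensionality => w.
by rewrite /state /vstar take_size_cat // eqxx !drop_size_cat.
Qed.

Lemma state_vstar_other v u f : size u = size v -> u != v -> state (vstar v f) u = tone.
Proof.
move=> Hs Hne; apply: functional_extensionality => w.
by rewrite /state /vstar take_size_cat // (negbTE Hne) drop_size_cat.
Qed.

Lemma W_perm (pi : {perm X}) : W (perm_act pi).
Proof.
split.
  exists (perm_act pi^-1); case=> [|x w] //=; by rewrite ?permK ?permKV.
split; first by case.
by move=> [|n] [|x w].
Qed.

Lemma perm_act_inv (pi : {perm X}) :
  tmul (perm_act pi) (perm_act pi^-1) = tone /\ tmul (perm_act pi^-1) (perm_act pi) = tone.
Proof.
by split; apply: functional_extensionality; case=> [|x w] //=; rewrite /tmul /= ?permK ?permKV.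
Qed.


Definition gen (S : vm -> Prop) : vm -> Prop :=
  fun g => forall G, subgroupW G -> (forall s, S s -> G s) -> G g.

Lemma gen_ind (S P : vm -> Prop) : subgroupW P -> (forall s, S s -> P s) ->
  forall g, gen S g -> P g.
Proof. by move=> HP HS g Hg; apply: Hg. Qed.

Lemma gen_tmul (S : vm -> Prop) g h : gen S g -> gen S h -> gen S (tmul g h).
Proof. by move=> Hg Hh G HG HS; apply: (proj1 (proj2 (proj2 HG))); [apply: Hg|apply: Hh]. Qed.

Lemma gen_tone (S : vm -> Prop) : gen S tone.
Proof. by move=> G [_ []]. Qed.

Lemma gen_W (S : vm -> Prop) : (forall s, S s -> W s) -> forall g, gen S g -> W g.
Proof. by move=> HS g Hg; apply: Hg => //; exact: W_sub. Qed.

Lemma inv_tmul g1 g2 h1 h2 :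
  tmul g1 h1 = tone -> tmul h1 g1 = tone -> tmul g2 h2 = tone -> tmul h2 g2 = tone ->
  tmul (tmul g1 g2) (tmul h2 h1) = tone /\ tmul (tmul h2 h1) (tmul g1 g2) = tone.
Proof.
move=> A1 A2 B1 B2; split; apply: functional_extensionality => w; rewrite /tmul.
  by rewrite (tone_ap B1) (tone_ap A1).
by rewrite (tone_ap A2) (tone_ap B2).
Qed.

Lemma gen_sub (S : vm -> Prop) : (forall s, S s -> W s) ->
  (forall s, S s -> exists t, S t /\ tmul s t = tone /\ tmul t s = tone) ->
  subgroupW (gen S).
Proof.
move=> HSW HSi.
split; first exact: gen_W.
split; first exact: gen_tone.
split; first by move=> g h; apply: gen_tmul.
pose T g := gen S g /\ exists h, gen S h /\ tmul g h = tone /\ tmul h g = tone.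
suff: forall g, gen S g -> T g by move=> H g /H [].
apply: gen_ind.
  split; first by move=> g [/(gen_W HSW)].
  split; first by split; [exact: gen_tone | exists tone; split; [exact: gen_tone|]].
  split.
    move=> g1 g2 [G1 [h1 [H1 [A1 A2]]]] [G2 [h2 [H2 [B1 B2]]]].
    split; first exact: gen_tmul.
    exists (tmul h2 h1); split; first exact: gen_tmul.
    exact: inv_tmul.
  move=> g [G1 [h [H1 [A1 A2]]]]; exists h; split=> //.
  by split=> //; exists g.
move=> s Ss; split; first by move=> G _ HS; apply: HS.
have [t [St [A1 A2]]] := HSi s Ss.
by exists t; split=> //; move=> G _ HS; apply: HS.
Qed.

Lemma subgroupW_ext (P Q : vm -> Prop) : (forall g, P g <-> Q g) -> subgroupW P -> subgroupW Q.
Proof.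
move=> E [H1 [H2 [H3 H4]]]; split; first by move=> g /E /H1.
split; first exact/E.
split; first by move=> g h /E Pg /E Ph; apply/E; exact: H3.
move=> g /E /H4 [h [Ph Hh]]; exists h; split=> //; exact/E.
Qed.

Definition SF (s : vm) := exists v (pi : {perm X}), s = vstar v (perm_act pi).

Lemma F_gen g : F g <-> gen SF g.
Proof.
split=> Hg G HG HS.
  by apply: Hg => // v pi; apply: HS; exists v, pi.
by apply: Hg => // s [v [pi ->]]; apply: HS.
Qed.

Lemma SF_W s : SF s -> W s.
Proof. by move=> [v [pi ->]]; apply: W_vstar; exact: W_perm. Qed.

Lemma SF_inv s : SF s -> exists t, SF t /\ tmul s t = tone /\ tmul t s = tone.
Proof.
move=> [v [pi ->]]; exists (vstar v (perm_act pi^-1)); split; first by exists v, (pi^-1)%g.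
have [A1 A2] := perm_act_inv pi.
by rewrite -!vstar_tmul A1 A2 vstar_tone.
Qed.

Lemma F_sub : subgroupW (@F X).
Proof.
apply: (subgroupW_ext (P := gen SF)); first by move=> g; split=> /F_gen.
exact: gen_sub SF_W SF_inv.
Qed.

Lemma F_W g : F g -> W g.
Proof. by move/(proj1 F_sub). Qed.


Lemma sub_inv_mem (P : vm -> Prop) g h : subgroupW P -> P g ->
  tmul g h = tone -> tmul h g = tone -> P h.
Proof.
move=> [_ [_ [_ Hi]]] Pg E1 E2; have [k [Pk [K1 K2]]] := Hi g Pg.
by rewrite (inv_uniq E1 K2).
Qed.

Lemma F_vstar1 x g : F g -> F (vstar [:: x] g).
Proof.
move: g; pose T g := F g /\ F (vstar [:: x] g).
suff: forall g, gen SF g -> T g by move=> H g /F_gen /H [].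
have [F1 [F2 [F3 F4]]] := F_sub.
apply: gen_ind.
  split; first by move=> g [/F1].
  split; first by split=> //; rewrite vstar_tone.
  split; first by move=> g h [? ?] [? ?]; split; [exact: F3|rewrite vstar_tmul; exact: F3].
  move=> g [Fg Fxg]; have [h [Fh [E1 E2]]] := F4 g Fg.
  exists h; split=> //; split=> //.
  apply: (sub_inv_mem F_sub Fxg); by rewrite -vstar_tmul ?E1 ?E2 vstar_tone.
move=> s [v [pi ->]]; split; first by apply/F_gen => G _ HS; apply: HS; exists v, pi.
by rewrite vstar_cons => G _ HS; apply: HS.
Qed.

Lemma F_lt n : level_transitive (@F X) n.
Proof.
elim: n => [|n IH] u w Hu Hw.
  by rewrite (size0nil Hu) (size0nil Hw); exists tone; split=> //; exact: (proj1 (proj2 F_sub)).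
case: u Hu => [//|x u] [Hu]; case: w Hw => [//|y w] [Hw].
have [g [Fg Eg]] := IH u w Hu Hw.
exists (tmul (vstar [::] (perm_act (tperm x y))) (vstar [:: y] g)); split.
  apply: (proj1 (proj2 (proj2 F_sub))); last exact: F_vstar1.
  by move=> G _ HS; apply: HS.
by rewrite /tmul vstar_nil /= tpermL /vstar /= take0 eqxx drop0 Eg.
Qed.

Lemma state_gen u (pi : {perm X}) v :
  state (vstar u (perm_act pi)) v = tone \/ SF (state (vstar u (perm_act pi)) v).
Proof.
case: (leqP (size v) (size u)) => Hvu.
  case E: (take (size v) u == v).
    right; move/eqP: E => E.
    have [u' Eu] : exists u', u = v ++ u' by exists (drop (size v) u); rewrite -{1}(cat_take_drop (size v) u) E.
    subst u; exists u', pi; apply: functional_extensionality => w.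
    rewrite /state /vstar size_cat take_cat ltnNge leq_addr /= addKn eqseq_cat // eqxx /=.
    rewrite drop_cat ltnNge leq_addr /= addKn.
    by case: ifP => _; [rewrite -catA drop_size_cat | rewrite drop_size_cat].
  left; apply: functional_extensionality => w; rewrite /state /vstar.
  have -> : (take (size u) (v ++ w) == u) = false.
    apply/negbTE/eqP => E'; move/eqP: E; apply.
    by rewrite -E' take_takel // take_size_cat.
  by rewrite drop_size_cat.
left; apply: functional_extensionality => w; rewrite /state /vstar takel_cat ?(ltnW Hvu) //.
case: eqP => E; last by rewrite drop_size_cat.
have Ev : v = u ++ drop (size u) v by rewrite -{1}(cat_take_drop (size u) v) E.
move: Ev Hvu; case: (drop (size u) v) => [|y v''] Ev Hvu.
  by move: Hvu; rewrite Ev cats0 ltnn.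
rewrite Ev -catA (@drop_size_cat _ (size u) u) //=.
by rewrite -cat_cons catA drop_size_cat // !size_cat.
Qed.

Lemma F_state g v : F g -> F (state g v).
Proof.
move: g v; pose T g := F g /\ forall v, F (state g v).
suff: forall g, gen SF g -> T g by move=> H g v /F_gen /H [].
have [F1 [F2 [F3 F4]]] := F_sub.
apply: gen_ind.
  split; first by move=> g [/F1].
  split; first by split=> // v'; rewrite state_tone.
  split.
    move=> g h [Fg Sg] [Fh Sh]; split; first exact: F3.
    by move=> v'; rewrite state_tmul; [apply: F3 | exact: F_W | exact: F_W].
  move=> g [Fg Sg]; have [h [Fh [E1 E2]]] := F4 g Fg.
  exists h; split=> //; split=> // v'.
  apply: (sub_inv_mem F_sub (Sg (h v'))).
    have := state_tmul (h v') (F_W Fg) (F_W Fh).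
    by rewrite E1 state_tone (tone_ap E2) => <-.
  have := state_tmul v' (F_W Fh) (F_W Fg).
  by rewrite E2 state_tone => <-.
move=> s [u [pi ->]]; split; first by apply/F_gen => G _ HS; apply: HS; exists u, pi.
move=> v'; case: (state_gen u pi v') => [->|]; first exact: F2.
by move=> [u' [pi' ->]] G _ HS; apply: HS.
Qed.

End Proof.


Section Sat.
Variable X : finType.
Local Notation vm := (vmap X).
Local Notation W := (@W X).
Local Notation tone := (@tone X).
Implicit Types (g h f : vm) (v u w : seq X).

Definition gpow g k : vm := fun w => iter k g w.

Lemma W_gpow g k : W g -> W (gpow g k).
Proof.
move=> Wg; elim: k => [|k IH]; first exact: W_tone.
by change (W (tmul (gpow g k) g)); apply: W_tmul.
Qed.

Lemma state_gpow f v k : W f -> f v = v ->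
  state (gpow f k) v = gpow (state f v) k /\ gpow f k v = v.
Proof.
move=> Wf fv; elim: k => [|k [IH1 IH2]]; first by split=> //; rewrite state_tone.
change (state (tmul (gpow f k) f) v = tmul (gpow (state f v) k) (state f v) /\ f (gpow f k v) = v).
rewrite state_tmul; [|exact: W_gpow|exact: Wf].
by rewrite IH1 IH2 fv.
Qed.

Lemma iter_cancel g h : (forall w, h (g w) = w) -> forall k w, iter k h (iter k g w) = w.
Proof. by move=> K; elim=> [//|k IH] w; rewrite iterSr /= K IH. Qed.

Lemma iter_mul g q L w : iter (q * L) g w = iter q (gpow g L) w.
Proof. by elim: q => [//|q IH]; rewrite mulSn iterD IH. Qed.

Lemma iter_fix g u q L : iter L g u = u -> iter (q * L) g u = u.
Proof. by move=> H; rewrite iter_mul; elim: q => [//|q IH] /=; rewrite IH. Qed.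

Lemma ex_minP (P : nat -> Prop) : (exists n, P n) -> exists n, P n /\ forall m, P m -> n <= m.
Proof.
move=> [n Pn]; apply: NNPP => H.
have: forall k m, m < k -> ~ P m.
  elim=> [//|k IH] m Hm Pm; apply: H; exists m; split=> // m' Pm'.
  rewrite leqNgt; apply/negP => Hlt; apply: (IH m') => //.
  exact: leq_trans Hlt Hm.
by move/(_ n.+1 n (ltnSn n)).
Qed.

Lemma period g u e : 0 < e -> iter e g u = u ->
  exists L, 0 < L /\ forall k, iter k g u = u <-> L %| k.
Proof.
move=> e0 He.
have [L [[L0 HL] Lmin]] := ex_minP (P := fun k => 0 < k /\ iter k g u = u) (ex_intro _ e (conj e0 He)).
exists L; split=> // k; split.
  move=> Hk; rewrite /dvdn; apply: NNPP => /negP Hr.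
  have r0 : 0 < k %% L by rewrite lt0n.
  have : L <= k %% L.
    apply: Lmin; split=> //.
    by move: Hk; rewrite {1}(divn_eq k L) addnC iterD iter_fix.
  by rewrite leqNgt ltn_pmod.
by move/dvdnP=> [q ->]; apply: iter_fix.
Qed.

Lemma level_exp n : exists e, 0 < e /\
  forall g, W g -> forall u, size u = n -> iter e g u = u.
Proof.
pose T := n.-tuple X.
exists #|[set: {perm T}]|; split; first by apply/card_gt0P; exists 1%g; rewrite inE.
move=> g Wg u Hu.
have Hs : forall t : T, size (g t) == n by move=> t; rewrite (W_size Wg) size_tuple.
pose f (t : T) : T := Tuple (Hs t).
have finj : injective f.
  by move=> t1 t2 /(congr1 val) /= /(W_inj Wg) /val_inj.
pose s := perm finj.
have Hv : forall k (t : T), val (iter k s t) = iter k g (val t).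
  by move=> k t; elim: k => [//|k IH] /=; rewrite permE /= IH.
have dv : #[s]%g %| #|[set: {perm T}]| by apply: cardSg; apply: subsetT.
have Hu' : size u == n by apply/eqP.
have := Hv #|[set: {perm T}]| (Tuple Hu') => /= <-.
rewrite -permX; move/dvdnP: dv => [q ->].
by rewrite mulnC expgnA expg_order expg1n perm1.
Qed.

End Sat.


Section Sat2.
Variable X : finType.
Local Notation vm := (vmap X).
Local Notation W := (@W X).
Local Notation tone := (@tone X).
Implicit Types (g h f : vm) (v u w : seq X).

Variable G : vm -> Prop.
Hypothesis HG : subgroupW G.
Hypothesis HGt : forall m, level_transitive G m.
Hypothesis HGv : forall x g, G g -> G (vstar [:: x] g).
Hypothesis HGs : forall g v, G g -> G (state g v).

Lemma G_W g : G g -> W g. Proof. exact: (proj1 HG). Qed.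
Lemma G_tone : G tone. Proof. exact: (proj1 (proj2 HG)). Qed.
Lemma G_tmul g h : G g -> G h -> G (tmul g h). Proof. exact: (proj1 (proj2 (proj2 HG))). Qed.
Lemma G_inv g : G g -> exists h, G h /\ tmul g h = tone /\ tmul h g = tone.
Proof. exact: (proj2 (proj2 (proj2 HG))). Qed.

Lemma G_vstar v g : G g -> G (vstar v g).
Proof.
elim: v => [|x v IH] Gg; first by rewrite vstar_nil.
by rewrite -vstar_cons; apply: HGv; apply: IH.
Qed.

Lemma G_gpow g k : G g -> G (gpow g k).
Proof.
move=> Gg; elim: k => [|k IH]; first exact: G_tone.
by change (G (tmul (gpow g k) g)); apply: G_tmul.
Qed.

Section Fixed.
Variables (n e : nat).
Hypothesis e0 : 0 < e.
Hypothesis Ke : forall g, G g -> forall u, size u = n -> iter e g u = u.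
Hypothesis Kmin : forall e', 0 < e' -> (forall g, G g -> forall u, size u = n -> iter e' g u = u) -> e <= e'.

Definition SH (s : vm) := exists g, G g /\ s = gpow g e.
Definition H := gen SH.

Lemma SH_W s : SH s -> W s.
Proof. by move=> [g [Gg ->]]; apply: W_gpow; apply: G_W. Qed.

Lemma gpow_inv g h k : tmul g h = tone -> tmul h g = tone ->
  tmul (gpow g k) (gpow h k) = tone /\ tmul (gpow h k) (gpow g k) = tone.
Proof.
move=> E1 E2; split; apply: functional_extensionality => w; rewrite /tmul /gpow.
  by apply: iter_cancel; apply: tone_ap.
by apply: iter_cancel; apply: tone_ap.
Qed.

Lemma SH_inv s : SH s -> exists t, SH t /\ tmul s t = tone /\ tmul t s = tone.
Proof.
move=> [g [Gg ->]]; have [h [Gh [E1 E2]]] := G_inv Gg.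
by exists (gpow h e); split; [exists h | apply: gpow_inv].
Qed.

Lemma H_sub : subgroupW H.
Proof. exact: gen_sub SH_W SH_inv. Qed.

Lemma H_G h : H h -> G h.
Proof. by apply: gen_ind => // s [g [Gg ->]]; apply: G_gpow. Qed.

Lemma H_W h : H h -> W h.
Proof. by move/H_G/G_W. Qed.

Lemma H_fix h : H h -> forall u, size u = n -> h u = u.
Proof.
move=> Hh; suff : W h /\ forall u, size u = n -> h u = u by case.
move: h Hh; apply: gen_ind.
  split; first by move=> g [].
  split; first by split; [exact: W_tone|].
  split.
    move=> g h [Wg Fg] [Wh Fh]; split; first exact: W_tmul.
    by move=> u Hu; rewrite /tmul Fg ?Fh.
  move=> g [Wg Fg]; have [h [Wh [E1 E2]]] := W_inv Wg.
  exists h; split=> //; split=> // u Hu.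
  by rewrite -{1}(Fg u Hu) (tone_ap E1).
move=> s [g [Gg ->]]; split; first by apply: W_gpow; apply: G_W.
exact: Ke.
Qed.


Lemma H_tmul h1 h2 : H h1 -> H h2 -> H (tmul h1 h2).
Proof. exact: gen_tmul. Qed.
Lemma H_tone : H tone.
Proof. exact: gen_tone. Qed.
Lemma H_gen g : G g -> H (gpow g e).
Proof. by move=> Gg G' _ HS; apply: HS; exists g. Qed.

Lemma H_char : Defs.characteristic H G.
Proof.
split; first exact: H_sub.
split; first exact: H_G.
move=> phi [P1 [P2 [P3 P4]]].
have phi1 : phi tone = tone.
  have E : phi tone = tmul (phi tone) (phi tone) := P4 _ _ G_tone G_tone.
  have [k [Gk [K1 K2]]] := G_inv (P1 _ G_tone).
  have : tmul (tmul (phi tone) (phi tone)) k = tone by rewrite -E.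
  change (tmul (phi tone) (tmul (phi tone) k) = tone -> phi tone = tone).
  by rewrite K1; exact: id.
have phipow : forall g k, G g -> phi (gpow g k) = gpow (phi g) k.
  move=> g k Gg; elim: k => [|k IH]; first exact: phi1.
  change (phi (tmul (gpow g k) g) = tmul (gpow (phi g) k) (phi g)).
  by rewrite P4; [rewrite IH | exact: G_gpow | exact: Gg].
have phiinv : forall g h, G g -> G h -> tmul g h = tone -> tmul (phi g) (phi h) = tone.
  by move=> g h Gg Gh E; rewrite -P4 // E phi1.
split.
  suff: forall h, H h -> G h /\ H (phi h) by move=> S h /S [].
  apply: gen_ind.
    split; first by move=> g [/G_W].
    split; first by split; [exact: G_tone | rewrite phi1; exact: H_tone].
    split.
      move=> g h [Gg Hg] [Gh Hh]; split; first exact: G_tmul.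
      by rewrite P4 //; apply: H_tmul.
    move=> g [Gg Hg]; have [h [Gh [E1 E2]]] := G_inv Gg.
    exists h; split=> //; split=> //.
    by apply: (sub_inv_mem H_sub Hg); apply: phiinv.
  move=> s [g [Gg ->]]; split; first exact: G_gpow.
  by rewrite phipow //; apply: H_gen; apply: P1.
apply: gen_ind.
  split; first by move=> g [h' [Hh' <-]]; apply: G_W; apply: P1; exact: H_G.
  split; first by exists tone; split; [exact: H_tone|].
  split.
    move=> g h [a [Ha <-]] [b [Hb <-]]; exists (tmul a b); split; first exact: H_tmul.
    by apply: P4; apply: H_G.
  move=> g [a [Ha <-]]; have [b [Hb [E1 E2]]] := proj2 (proj2 (proj2 H_sub)) a Ha.
  exists (phi b); split; first by exists b.
  by split; apply: phiinv => //; apply: H_G.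
move=> s [g [Gg ->]]; have [g' [Gg' <-]] := P3 g Gg.
by exists (gpow g' e); split; [apply: H_gen | apply: phipow].
Qed.


Variable v : seq X.
Hypothesis Hv : size v = n.

Definition Sk k := forall c, G c -> exists h, H h /\ state h v = gpow c k.

Lemma S0 : Sk 0.
Proof. by move=> c Gc; exists tone; split; [exact: H_tone | rewrite state_tone]. Qed.

Lemma Sadd a b : Sk a -> Sk b -> Sk (a + b).
Proof.
move=> Sa Sb c Gc; have [h1 [H1 E1]] := Sa c Gc; have [h2 [H2 E2]] := Sb c Gc.
exists (tmul h1 h2); split; first exact: H_tmul.
rewrite state_tmul; [|exact: H_W|exact: H_W].
rewrite (H_fix H1 Hv) E1 E2; apply: functional_extensionality => x.
by rewrite /tmul /gpow -iterD addnC.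
Qed.

Lemma Smul q d : Sk d -> Sk (q * d).
Proof. by move=> Sd; elim: q => [|q IH]; [exact: S0 | rewrite mulSn; apply: Sadd]. Qed.

Lemma Ssub a b : Sk a -> Sk b -> b <= a -> Sk (a - b).
Proof.
move=> Sa Sb ba c Gc; have [h1 [H1 E1]] := Sa c Gc; have [h2 [H2 E2]] := Sb c Gc.
have [h2i [H2i [I1 I2]]] := proj2 (proj2 (proj2 H_sub)) h2 H2.
exists (tmul h1 h2i); split; first exact: H_tmul.
have K : forall x, state h2i v (gpow c b x) = x.
  move=> x; have := state_tmul v (H_W H2) (H_W H2i).
  rewrite I1 state_tone (H_fix H2 Hv) E2 => E.
  by have := congr1 (fun f => f x) E.
rewrite state_tmul; [|exact: H_W|exact: H_W].
rewrite (H_fix H1 Hv) E1; apply: functional_extensionality => x.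
by rewrite /tmul /gpow -{1}(subnKC ba) iterD; apply: K.
Qed.

Lemma Se : Sk e.
Proof.
move=> c Gc; exists (gpow (vstar v c) e); split; first by apply: H_gen; apply: G_vstar.
have Wc : W (vstar v c) by apply: W_vstar; apply: G_W.
have fv : vstar v c v = v by apply: vstar_fix => //; apply: G_W.
by rewrite (proj1 (state_gpow e Wc fv)) state_vstar_self.
Qed.

Lemma Sprime p : prime p -> exists k, Sk k /\ ~~ (p %| k).
Proof.
move=> pp; case: (boolP (p %| e)) => pe; last by exists e; split=> //; exact: Se.
set a := logn p e.
have [g0 [u0 [L [Gg0 [Hu0 [L0 [HL pL]]]]]]] : exists g0 u0 L, G g0 /\ size u0 = n /\ 0 < L /\
    (forall k, iter k g0 u0 = u0 <-> L %| k) /\ p ^ a %| L.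
  apply: NNPP => Hn.
  have : e <= e %/ p.
    apply: Kmin; first by rewrite divn_gt0 ?prime_gt0 // dvdn_leq.
    move=> g Gg u Hu; have [L [L0 HL]] := period e0 (Ke Gg Hu).
    have Le : L %| e by apply/HL; exact: Ke.
    have npL : ~~ (p ^ a %| L) by apply/negP => pL; apply: Hn; exists g, u, L.
    apply/HL; move: Le => /dvdnP [q Eq].
    have pq : p %| q.
      apply: contraR npL => npq.
      have cop : coprime (p ^ a) q by apply: coprimeXl; rewrite prime_coprime.
      by rewrite -(Gauss_dvdr _ cop) -Eq /a pfactor_dvdnn.
    by rewrite Eq -(divn_mulAC _ pq) dvdn_mull.
  by rewrite leqNgt ltn_Pdiv ?prime_gt1.
have [t [Gt Et]] := HGt Hv Hu0.
have [ti [Gti [T1 T2]]] := G_inv Gt.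
pose g1 := tmul t (tmul g0 ti).
have Gg1 : G g1 by apply: G_tmul => //; apply: G_tmul.
have Hiter : forall k w, iter k g1 w = ti (iter k g0 (t w)).
  elim=> [|k IH] w /=; first by rewrite (tone_ap T1).
  by rewrite IH /g1 /tmul (tone_ap T2).
have HL1 : forall k, iter k g1 v = v <-> L %| k.
  move=> k; rewrite Hiter Et -HL; split=> E.
    by have := congr1 t E; rewrite (tone_ap T2) Et.
  by rewrite E -Et (tone_ap T1).
pose a' := state (gpow g1 L) v.
have Ga : G a' by apply: HGs; apply: G_gpow.
have [ai [Gai [A1 A2]]] := G_inv Ga.
have Le : L %| e by apply/HL1; apply: Ke.
exists (e %/ L); split; last first.
  apply/negP => pd.
  have : p ^ a.+1 %| e by rewrite -(divnK Le) expnSr mulnC dvdn_mul.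
  by rewrite pfactor_dvdn // ltnn.
move=> c Gc.
pose d := tmul c ai; pose g := tmul (vstar v d) g1.
have Gd : G d by apply: G_tmul.
have Gg : G g by apply: G_tmul => //; apply: G_vstar.
have Wd := G_W Gd; have Wg := G_W Gg; have Wg1 := G_W Gg1.
have Wvd : W (vstar v d) by apply: W_vstar.
have step : forall k, 0 < k -> k <= L ->
    state (gpow g k) v = tmul d (state (gpow g1 k) v) /\ gpow g k v = gpow g1 k v.
  elim=> [//|k IH] _ HkL.
  case: (posnP k) => [->|k0].
    change (state g v = tmul d (state g1 v) /\ g v = g1 v).
    rewrite /g state_tmul; [|exact: Wvd|exact: Wg1].
    by rewrite state_vstar_self /tmul vstar_fix.
  have [IH1 IH2] := IH k0 (ltnW HkL).
  set y := gpow g1 k v.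
  have yv : y != v.
    apply/eqP => E; have : L %| k by apply/HL1.
    by move/(dvdn_leq k0); rewrite leqNgt HkL.
  have ys : size y = size v by rewrite /y (W_size (W_gpow k Wg1)).
  change (state (tmul (gpow g k) g) v = tmul d (state (tmul (gpow g1 k) g1) v) /\
          g (gpow g k v) = g1 (gpow g1 k v)).
  rewrite state_tmul; [|exact: W_gpow|exact: Wg].
  rewrite (state_tmul v); [|exact: W_gpow|exact: Wg1].
  rewrite IH1 IH2 -/y.
  have -> : state g y = state g1 y.
    rewrite /g state_tmul; [|exact: Wvd|exact: Wg1].
    by rewrite state_vstar_other // vstar_fix.
  by split=> //; rewrite /g /tmul vstar_fix.
have [SL1 SL2] := step L L0 (leqnn L).
have gLc : state (gpow g L) v = c.
  rewrite SL1 -/a'; apply: functional_extensionality => x.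
  by rewrite /tmul /d (tone_ap A2).
have gLv : gpow g L v = v by rewrite SL2; apply/HL1.
exists (gpow g e); split; first exact: H_gen.
have -> : gpow g e = gpow (gpow g L) (e %/ L).
  by apply: functional_extensionality => w; rewrite /gpow -iter_mul divnK.
by rewrite (proj1 (state_gpow _ (W_gpow L Wg) gLv)) gLc.
Qed.

Lemma S1 : Sk 1.
Proof.
have main : forall N d, d <= N -> Sk d -> 0 < d -> Sk 1.
  elim=> [|N IH] d dN Sd d0; first by move: d0; rewrite lt0n -leqn0 dN.
  case: (ltngtP d 1) => [dl|d1|de]; [by move: d0 dl; clear; case: d | | by move: Sd; rewrite de].
  have pp := pdiv_prime d1.
  have [k [Sk' pk]] := Sprime pp.
  have Sr : Sk (k %% d).
    have -> : k %% d = k - k %/ d * d by rewrite {2}(divn_eq k d) addKn.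
    by apply: Ssub => //; [apply: Smul | rewrite leq_divM].
  case: (posnP (k %% d)) => r0.
    have : d %| k by rewrite /dvdn r0.
    by move/(dvdn_trans (pdiv_dvd d)); rewrite (negbTE pk).
  apply: (IH (k %% d)) => //.
  by rewrite -ltnS (leq_trans (ltn_pmod _ d0)).
exact: (main e e (leqnn e) Se e0).
Qed.

Lemma H_trans m : level_transitive (fun k => exists2 h, H h & k = state h v) m.
Proof.
move=> u w Hu Hw; have [c [Gc Ec]] := HGt Hu Hw.
have [h [Hh Eh]] := S1 Gc.
by exists (state h v); split; [exists h | rewrite Eh].
Qed.

End Fixed.

Theorem sat_of : saturated G.
Proof.
move=> n.
have [e0 [e0p He0]] := level_exp X n.
have [e [[ep Ke] Kmin]] := ex_minP (P := fun e => 0 < e /\ forall g, G g -> forall u, size u = n -> iter e g u = u)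
  (ex_intro _ e0 (conj e0p (fun g Gg => He0 g (G_W Gg)))).
exists (H e); split; first exact: H_char.
split; first by move=> h Hh u Hu; exact: (H_fix Ke Hh Hu).
move=> v Hv m.
apply: (H_trans ep Ke _ Hv).
by move=> e' e'0 Ke'; apply: Kmin.
Qed.

End Sat2.


Theorem proposition3p10 (X : finType) (hX : 1 < #|X|) :
  (layered (@F X) /\ saturated (@F X)) /\ (layered (@W X) /\ saturated (@W X)).
Proof.
have FL : forall m, level_transitive (@F X) m by exact: F_lt.
have WL : forall m, level_transitive (@W X) m.
  by move=> m u w Hu Hw; have [g [Fg Eg]] := FL m u w Hu Hw; exists g; split=> //; exact: F_W.
split; split.
- split; first exact: F_sub.
  by split=> // x g; exact: F_vstar1.
- apply: sat_of; [exact: F_sub | exact: FL | exact: F_vstar1 | exact: F_state].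
- split; first exact: W_sub.
  by split=> // x g; exact: W_vstar.
- apply: sat_of; [exact: W_sub | exact: WL | move=> x g; exact: W_vstar | move=> g v; exact: W_state].
Qed.
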